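(* Let $G$ be a non-regular simple graph on $n$ vertices, and let $u,v$ be vertices of $G$ with $d_G(u)<d_G(v)$. Let $R:=V(G)\setminus\{u,v\}$. If $F_k(G)$ is regular for some integer $k$ with $2\le k\le n-2$, then $d_R(u)=0$, i.e. $u$ has no neighbor in $R$.
   Context: For a simple graph $G=(V,E)$ on $n$ vertices and an integer $1\le k<n$, the $k$-token graph $F_k(G)$ is the graph whose vertices are all $k$-element subsets of $V$, two such subsets $A,B$ being adjacent whenever their symmetric difference $A\triangle B$ is a pair $\{a,b\}$ with $a$ adjacent to $b$ in $G$. For $X\subseteq V$ and $x\in V$, $d_X(x)$ is the number of neighbors of $x$ in $X$; $d_G(x)$ is the degree of $x$ in $G$. *)

(* Defs.v *)
From mathcomp Require Import all_boot.
Set Implicit Arguments. Unset Strict Implicit. Unset Printing Implicit Defensive.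

Definition simple_graph (T : finType) (e : rel T) : Prop :=
  symmetric e /\ irreflexive e.

Definition deg (T : finType) (e : rel T) (x : T) : nat := #|[set y | e x y]|.

Definition deg_in (T : finType) (e : rel T) (X : {set T}) (x : T) : nat :=
  #|[set y in X | e x y]|.

Definition regular_graph (T : finType) (e : rel T) : Prop :=
  forall x y : T, deg e x = deg e y.

Definition symdiff (T : finType) (A B : {set T}) : {set T} := (A :\: B) :|: (B :\: A).

(* adjacency in the k-token graph F_k(G) (on k-subsets) *)
Definition token_adj (T : finType) (e : rel T) (A B : {set T}) : bool :=
  [exists a, exists b, (symdiff A B == [set a; b]) && e a b].

Definition token_deg (T : finType) (e : rel T) (k : nat) (A : {set T}) : nat :=
  #|[set B : {set T} | (#|B| == k) && token_adj e A B]|.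

Definition token_regular (T : finType) (e : rel T) (k : nat) : Prop :=
  forall A B : {set T}, #|A| = k -> #|B| = k -> token_deg e k A = token_deg e k B.

(* Main.v *)
Require Import Defs.
From mathcomp Require Import all_boot.
From mathcomp Require Import zify.
Set Implicit Arguments. Unset Strict Implicit. Unset Printing Implicit Defensive.

Definition N (T : finType) (e : rel T) (A : {set T}) : nat :=
  \sum_(a in A) \sum_(b | b \notin A) (e a b : nat).

Lemma card_sum (T : finType) (X : {set T}) (P : pred T) :
  #|[set y in X | P y]| = \sum_(y in X) (P y : nat).
Proof.
rewrite -sum1dep_card big_mkcondr /=.
by apply: eq_bigr => i _; case: (P i).
Qed.

Lemma tokN (T : finType) (e : rel T) (k : nat) (A : {set T}) :
  simple_graph e -> #|A| = k -> token_deg e k A = N e A.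
Proof.
move=> [sym irr] cA.
pose P := [set p : T * T | (p.1 \in A) && (p.2 \notin A) && e p.1 p.2].
pose g := fun p : T * T => p.2 |: (A :\ p.1).
rewrite /token_deg.
have -> : [set B : {set T} | (#|B| == k) && token_adj e A B] = g @: P.
  apply/setP => B; rewrite inE; apply/andP/imsetP.
  - move=> [/eqP cB /existsP [a /existsP [b /andP [/eqP hs eab]]]].
    have ab : a != b by apply/eqP => ab; rewrite ab irr in eab.
    have c2 : #|symdiff A B| = 2 by rewrite hs cards2 ab.
    have cAB := cardsID B A; have cBA := cardsID A B.
    have hU : #|symdiff A B| = #|A :\: B| + #|B :\: A|.
      rewrite /symdiff cardsU.
      have -> : (A :\: B) :&: (B :\: A) = set0.
        by apply/setP => x; rewrite !inE; case: (x \in A); case: (x \in B).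
      by rewrite cards0 subn0.
    rewrite setIC in cBA.
    have h1 : #|A :\: B| == 1 by apply/eqP; lia.
    have h2 : #|B :\: A| == 1 by apply/eqP; lia.
    move: h1 h2 => /cards1P [a' ha'] /cards1P [b' hb'].
    have a'A : a' \in A :\: B by rewrite ha' set11.
    have b'B : b' \in B :\: A by rewrite hb' set11.
    have a's : a' \in symdiff A B by rewrite /symdiff inE a'A.
    have b's : b' \in symdiff A B by rewrite /symdiff inE b'B orbT.
    rewrite hs !inE in a's b's.
    move: a'A b'B; rewrite !inE => /andP [na'B a'A] /andP [nb'A b'B].
    exists (a', b').
      rewrite inE /= a'A nb'A /=.
      case/orP: a's => /eqP Ha; case/orP: b's => /eqP Hb; subst a' b' => //.
      - by rewrite a'A in nb'A.
      - by rewrite sym.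
      - by rewrite a'A in nb'A.
    apply/setP => x; rewrite /g /= !inE.
    have HA : (x \in A :\: B) = (x \in [set a']) by rewrite ha'.
    have HB : (x \in B :\: A) = (x \in [set b']) by rewrite hb'.
    rewrite !inE in HA HB; rewrite -HA -HB.
    by case: (x \in A); case: (x \in B).
  - move=> [[a b]]; rewrite inE /= => /andP [/andP [aA nbA] eab] ->.
    have ab : a != b by apply/eqP => ab; rewrite -ab aA in nbA.
    split.
      rewrite /g /= cardsU1 !inE negb_and nbA orbT /=.
      have := cardsD1 a A; rewrite aA; lia.
    apply/existsP; exists a; apply/existsP; exists b; rewrite eab andbT.
    apply/eqP/setP => x; rewrite /symdiff /g /= !inE.
    case: (eqVneq x a) => [->|xa]; first by rewrite aA (negbTE ab) /=.
    case: (eqVneq x b) => [->|xb] /=; first by rewrite (negbTE nbA).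
    by case: (x \in A).
rewrite card_in_imset; last first.
  move=> [a b] [c d]; rewrite !inE /g /= => /andP [/andP [aA nbA] _] /andP [/andP [cA2 ndA] _] h.
  have hx : (a \in b |: A :\ a) = (a \in d |: A :\ c) by rewrite h.
  have hy : (b \in b |: A :\ a) = (b \in d |: A :\ c) by rewrite h.
  rewrite !inE eqxx /= in hx hy.
  have ab : (a == b) = false by apply/negbTE/eqP => ab0; rewrite -ab0 aA in nbA.
  have ad : (a == d) = false by apply/negbTE/eqP => ab0; rewrite -ab0 aA in ndA.
  rewrite ab ad aA /= andbT in hx.
  have ac : a = c by apply/eqP; move: hx; case: (a == c).
  subst c.
  rewrite (negbTE nbA) andbF orbF in hy.
  by rewrite eqxx orbF in hy; rewrite (eqP (esym hy)).
rewrite /N pair_big_dep /= -sum1dep_card big_mkcond /=.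
rewrite [RHS]big_mkcond; apply: eq_bigr => -[a b] _ /=.
by case: (a \in A); case: (b \in A); case: (e a b).
Qed.
Lemma Nadd (T : finType) (e : rel T) (X : {set T}) (p : T) :
  simple_graph e -> p \notin X ->
  N e (p |: X) + 2 * deg_in e X p = N e X + deg e p.
Proof.
move=> [sym irr] pX.
have hb : forall a, \sum_(b | b \notin X) (e a b : nat) =
            e a p + \sum_(b | b \notin p |: X) (e a b : nat).
  move=> a; rewrite (bigD1 p) //=; congr (_ + _); apply: eq_bigl => b.
  by rewrite !inE negb_or andbC.
have h1 : N e X = \sum_(a in X) (e a p : nat) + \sum_(a in X) \sum_(b | b \notin p |: X) (e a b : nat).
  by rewrite /N -big_split /=; apply: eq_bigr => a _; rewrite hb.
have h2 : \sum_(a in X) (e a p : nat) = deg_in e X p.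
  by rewrite /deg_in card_sum; apply: eq_bigr => a _; rewrite sym.
have h3 : deg e p = deg_in e X p + \sum_(b | b \notin X) (e p b : nat).
  rewrite /deg_in card_sum /deg.
  have -> : [set y | e p y] = [set y in setT | e p y] by apply/setP => y; rewrite !inE.
  rewrite card_sum (bigID (fun b => b \in X)) /=.
  by congr (_ + _); apply: eq_bigl => b; rewrite inE.
rewrite hb irr /= in h3.
rewrite /N big_setU1 //= -/(N e X) h1.
rewrite h2 h3; lia.
Qed.
Lemma deg_in_U1 (T : finType) (e : rel T) (S : {set T}) (x p : T) :
  x \notin S -> deg_in e (x |: S) p = e p x + deg_in e S p.
Proof. by move=> xS; rewrite /deg_in !card_sum big_setU1. Qed.

Theorem lemma4 (T : finType) (e : rel T) (u v : T) (k : nat) :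
  simple_graph e ->
  ~ regular_graph e ->
  deg e u < deg e v ->
  2 <= k <= #|T| - 2 ->
  token_regular e k ->
  deg_in e (~: [set u; v]) u = 0.
Proof.
move=> sg _ duv /andP [k2 kn] treg.
have [sym irr] := sg.
have uv : u != v by apply/eqP => uv; rewrite uv ltnn in duv.
apply/eqP; rewrite cards_eq0; apply/eqP/setP => w; rewrite !inE.
apply/negP => /andP [wR euw].
move: wR; rewrite negb_or => /andP [wu wv].
have key : forall y, y != u -> y != v -> e v y -> e u y.
  move=> y yu yv evy.
  case: (eqVneq y w) => [-> //|yw].
  case Euy: (e u y) => //.
  pose R4 := ~: [set u; v; w; y].
  have cR4 : #|R4| = #|T| - 4.
    have c4 : #|[set u; v; w; y]| = 4.
      have -> : [set u; v; w; y] = [set x in [:: u; v; w; y]].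
        by apply/setP => x; rewrite !inE !orbA.
      rewrite cardsE; apply/card_uniqP; rewrite /= !inE !negb_or.
      rewrite uv (eq_sym u w) wu (eq_sym u y) yu (eq_sym v w) wv (eq_sym v y) yv.
      by rewrite (eq_sym w y) yw.
    have := cardsC [set u; v; w; y]; rewrite c4 -/R4; lia.
  have : k - 2 <= #|R4| by rewrite cR4; lia.
  move=> /card_geqP [s [us hs ss]].
  pose S0 := [set x in s].
  have cS0 : #|S0| = k - 2 by rewrite cardsE; move/card_uniqP: us => ->.
  have inS0 : forall x, x \in S0 -> x \in R4 by move=> x; rewrite inE => /ss.
  have nS0 : forall x, x \in [set u; v; w; y] -> x \notin S0.
    by move=> x hx; apply/negP => /inS0; rewrite inE hx.
  have uS0 : u \notin S0 by apply: nS0; rewrite !inE eqxx.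
  have vS0 : v \notin S0 by apply: nS0; rewrite !inE eqxx ?orbT.
  have wS0 : w \notin S0 by apply: nS0; rewrite !inE eqxx ?orbT.
  have yS0 : y \notin S0 by apply: nS0; rewrite !inE eqxx ?orbT.
  have side : forall z p, z \notin S0 -> p \notin S0 -> p != z ->
      (#|z |: S0| = k - 1) /\ (p \notin z |: S0).
    move=> z p zS pS pz; rewrite cardsU1 zS cS0 in_setU1 negb_or pz pS; split; last by []; clear -k2; rewrite /=; lia.
  have eqs : forall z, z \notin S0 -> z != u -> z != v ->
     N e (u |: (z |: S0)) + 2 * (e u z + deg_in e S0 u) = N e (z |: S0) + deg e u /\
     N e (v |: (z |: S0)) + 2 * (e v z + deg_in e S0 v) = N e (z |: S0) + deg e v /\
     N e (u |: (z |: S0)) = N e (v |: (z |: S0)).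
    move=> z zS zu zv.
    have [cz uz] := side z u zS uS0 ltac:(by rewrite eq_sym).
    have [_ vz] := side z v zS vS0 ltac:(by rewrite eq_sym).
    have cU : #|u |: (z |: S0)| = k.
      by rewrite cardsU1 uz cz /=; clear -k2; lia.
    have cV : #|v |: (z |: S0)| = k.
      by rewrite cardsU1 vz cz /=; clear -k2; lia.
    have t := treg _ _ cU cV; rewrite (tokN sg cU) (tokN sg cV) in t.
    rewrite -!(deg_in_U1 e _ zS).
    split; first exact: Nadd.
    split; first exact: Nadd.
    exact: t.
  have [a1 [a2 a3]] := eqs w wS0 wu wv.
  have [b1 [b2 b3]] := eqs y yS0 yu yv.
  move: a1 a2 a3 b1 b2 b3; rewrite euw Euy evy.
  case: (e v w) => /=.
  - clear; lia.
  - clear; lia.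
have sub : [set x | e v x] :\ u \subset [set x | e u x] :\ v.
  apply/subsetP => x; rewrite !inE => /andP [xu evx].
  have xv : x != v by apply/eqP => xv; rewrite xv irr in evx.
  by rewrite xv key.
have := subset_leq_card sub.
have := cardsD1 u [set x | e v x]; have := cardsD1 v [set x | e u x].
rewrite !inE sym.
rewrite /deg in duv.
move: duv; case: (e u v) => /=; clear; lia.
Qed.
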